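(* Let $A,G$ be selfadjoint operators in $\mathcal H$ and let $p\neq0$ be a polynomial with real coefficients of degree $d$. Then: (a) if $(A,G)$ is definitizable with definitizing polynomial $p$, then $(G,A)$ is definitizable with definitizing polynomial $\lambda\mapsto\lambda p(\lambda)$; (b) if $G$ is boundedly invertible, then $(A,G)$ is definitizable with definitizing polynomial $p$ if and only if $\rho(AG)\neq\emptyset$, $\rho(GA)\neq\emptyset$ and $(p(GA)x,G^{-1}x)\ge0$ for all $x\in\operatorname{dom}(GA)^{\max\{1,d\}}$.
   Context: $(\mathcal H,(\cdot,\cdot))$ complex Hilbert space; $A,G$ possibly unbounded selfadjoint; $AG,GA$ operator products with natural domains. $\rho(S)$: set of $\lambda$ with $S-\lambda$ injective, surjective, with bounded everywhere defined inverse; boundedly invertible means $0\in\rho(S)$. Definition: the ordered pair $(A,G)$ is definitizable if $\rho(AG)\neq\emptyset$, $\rho(GA)\neq\emptyset$ and there is a polynomial $p\neq0$ with real coefficients, of degree $d$, such that $(p(AG)x,Gx)\ge0$ for all $x\in\operatorname{dom}(AG)^{\max\{1,d\}}$; $p$ is then called definitizing for $(A,G)$. *)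

(* Defs.v *)
From Stdlib Require Import Reals ClassicalEpsilon.
Open Scope R_scope.

Record C := mkC { Re : R; Im : R }.
Definition C0 : C := mkC 0 0.
Definition C1 : C := mkC 1 0.
Definition RtoC (r : R) : C := mkC r 0.
Definition Cadd (a b : C) : C := mkC (Re a + Re b) (Im a + Im b).
Definition Copp (a : C) : C := mkC (- Re a) (- Im a).
Definition Cmul (a b : C) : C :=
  mkC (Re a * Re b - Im a * Im b) (Re a * Im b + Im a * Re b).
Definition Cconj (a : C) : C := mkC (Re a) (- Im a).
Definition Cnonneg (c : C) : Prop := Im c = 0 /\ 0 <= Re c.

Record Hilbert := {
  hcar :> Type;
  hzero : hcar;
  hadd : hcar -> hcar -> hcar;
  hopp : hcar -> hcar;
  hscal : C -> hcar -> hcar;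
  hinner : hcar -> hcar -> C;
  hadd_assoc : forall x y z, hadd x (hadd y z) = hadd (hadd x y) z;
  hadd_comm : forall x y, hadd x y = hadd y x;
  hadd_zero : forall x, hadd x hzero = x;
  hadd_opp : forall x, hadd x (hopp x) = hzero;
  hscal_one : forall x, hscal C1 x = x;
  hscal_assoc : forall a b x, hscal a (hscal b x) = hscal (Cmul a b) x;
  hscal_addv : forall a x y, hscal a (hadd x y) = hadd (hscal a x) (hscal a y);
  hscal_adds : forall a b x, hscal (Cadd a b) x = hadd (hscal a x) (hscal b x);
  hinner_addl : forall x y z, hinner (hadd x y) z = Cadd (hinner x z) (hinner y z);
  hinner_scall : forall a x y, hinner (hscal a x) y = Cmul a (hinner x y);
  hinner_sym : forall x y, hinner y x = Cconj (hinner x y);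
  hinner_pos : forall x, 0 <= Re (hinner x x);
  hinner_def : forall x, hinner x x = C0 -> x = hzero;
  hcomplete : forall u : nat -> hcar,
    (forall eps, 0 < eps -> exists N, forall m n, (N <= m)%nat -> (N <= n)%nat ->
        sqrt (Re (hinner (hadd (u m) (hopp (u n))) (hadd (u m) (hopp (u n))))) < eps) ->
    exists l, forall eps, 0 < eps -> exists N, forall n, (N <= n)%nat ->
        sqrt (Re (hinner (hadd (u n) (hopp l)) (hadd (u n) (hopp l)))) < eps
}.

Arguments hzero {h}. Arguments hadd {h}. Arguments hopp {h}.
Arguments hscal {h}. Arguments hinner {h}.

Definition hnorm {H : Hilbert} (x : H) : R := sqrt (Re (hinner x x)).
Definition hsub {H : Hilbert} (x y : H) : H := hadd x (hopp y).

(** * (Partial, possibly unbounded) operators: a domain and an action;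
      the action outside the domain is irrelevant. *)
Record Op (H : Hilbert) := mkOp { dom : H -> Prop; ap : H -> H }.
Arguments mkOp {H}. Arguments dom {H}. Arguments ap {H}.

Definition linear_op {H : Hilbert} (T : Op H) : Prop :=
  dom T hzero /\
  (forall x y, dom T x -> dom T y -> dom T (hadd x y) /\
                ap T (hadd x y) = hadd (ap T x) (ap T y)) /\
  (forall a x, dom T x -> dom T (hscal a x) /\ ap T (hscal a x) = hscal a (ap T x)).

Definition dense {H : Hilbert} (D : H -> Prop) : Prop :=
  forall x eps, 0 < eps -> exists y, D y /\ hnorm (hsub x y) < eps.

(** Selfadjoint: densely defined linear operator with T equals its adjoint, i.e. T is
    symmetric (T ⊆ adjoint of T) and dom(adjoint of T) ⊆ dom T. *)
Definition selfadjoint {H : Hilbert} (T : Op H) : Prop :=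
  linear_op T /\ dense (dom T) /\
  (forall x y, dom T x -> dom T y -> hinner (ap T x) y = hinner x (ap T y)) /\
  (forall y z, (forall x, dom T x -> hinner (ap T x) y = hinner x z) -> dom T y).

Definition opmul {H : Hilbert} (S T : Op H) : Op H :=
  mkOp (fun x => dom T x /\ dom S (ap T x)) (fun x => ap S (ap T x)).

Definition opid (H : Hilbert) : Op H := mkOp (fun _ => True) (fun x => x).

Fixpoint oppow {H : Hilbert} (T : Op H) (n : nat) : Op H :=
  match n with
  | O => opid H
  | S k => opmul (oppow T k) T
  end.

Definition is_degree (p : nat -> R) (d : nat) : Prop :=
  p d <> 0 /\ forall k, (d < k)%nat -> p k = 0.

(** The polynomial λ ↦ λ p(λ). *)
Definition shiftX (p : nat -> R) : nat -> R :=
  fun k => match k with O => 0 | S j => p j end.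

Fixpoint hsum_upto {H : Hilbert} (f : nat -> H) (n : nat) : H :=
  match n with
  | O => f O
  | S k => hadd (hsum_upto f k) (f (S k))
  end.

Definition polyop {H : Hilbert} (T : Op H) (p : nat -> R) (d : nat) : Op H :=
  mkOp (dom (oppow T d))
       (fun x => hsum_upto (fun k => hscal (RtoC (p k)) (ap (oppow T k) x)) d).

(** Resolvent set: T - λ injective, surjective, with bounded (everywhere
    defined) inverse. *)
Definition in_rho {H : Hilbert} (T : Op H) (l : C) : Prop :=
  (forall x y, dom T x -> dom T y ->
     hsub (ap T x) (hscal l x) = hsub (ap T y) (hscal l y) -> x = y) /\
  (forall z, exists x, dom T x /\ hsub (ap T x) (hscal l x) = z) /\
  (exists c, forall x, dom T x -> hnorm x <= c * hnorm (hsub (ap T x) (hscal l x))).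

Definition rho_nonempty {H : Hilbert} (T : Op H) : Prop := exists l, in_rho T l.

Definition boundedly_invertible {H : Hilbert} (T : Op H) : Prop := in_rho T C0.

(** The inverse operator (meaningful when T is bijective). *)
Definition inv_op {H : Hilbert} (T : Op H) : Op H :=
  mkOp (fun _ => True)
       (fun x => epsilon (inhabits (@hzero H)) (fun y => dom T y /\ ap T y = x)).

Definition definitizable_with {H : Hilbert} (A G : Op H) (p : nat -> R) (d : nat)
  : Prop :=
  rho_nonempty (opmul A G) /\ rho_nonempty (opmul G A) /\
  forall x, dom (oppow (opmul A G) (Nat.max 1 d)) x ->
    Cnonneg (hinner (ap (polyop (opmul A G) p d) x) (ap G x)).

(* Main.v *)
Require Import Defs.
From Stdlib Require Import Reals Lra Lia ClassicalEpsilon Classical.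
Open Scope R_scope.
Local Notation C := Defs.C.
Local Notation C1 := Defs.C1.
Local Notation C0 := Defs.C0.

Arguments hadd_assoc {h}. Arguments hadd_comm {h}. Arguments hadd_zero {h}.
Arguments hadd_opp {h}. Arguments hscal_one {h}. Arguments hscal_assoc {h}.
Arguments hscal_addv {h}. Arguments hscal_adds {h}. Arguments hinner_addl {h}.
Arguments hinner_scall {h}. Arguments hinner_sym {h}. Arguments hinner_pos {h}.
Arguments hinner_def {h}.

Lemma Ceq (a b : C) : Re a = Re b -> Im a = Im b -> a = b.
Proof. destruct a, b; simpl; intros; subst; reflexivity. Qed.


Lemma hadd_cancel {H : Hilbert} (a b c : H) : hadd a b = hadd a c -> b = c.
Proof.
  intros E.
  assert (E2 : hadd (hopp a) (hadd a b) = hadd (hopp a) (hadd a c)) by (rewrite E; reflexivity).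
  rewrite !hadd_assoc in E2.
  rewrite (hadd_comm (hopp a) a), hadd_opp in E2.
  rewrite !(hadd_comm hzero), !hadd_zero in E2. exact E2.
Qed.

Lemma hzero_add {H : Hilbert} (a : H) : hadd hzero a = a.
Proof. rewrite hadd_comm; apply hadd_zero. Qed.

Lemma hscal_zero_s {H : Hilbert} (x : H) : hscal C0 x = hzero.
Proof.
  apply (hadd_cancel (hscal C0 x)). rewrite hadd_zero, <- hscal_adds.
  f_equal. apply Ceq; simpl; ring.
Qed.

Lemma hopp_scal {H : Hilbert} (x : H) : hopp x = hscal (RtoC (-1)) x.
Proof.
  apply (hadd_cancel x). rewrite hadd_opp.
  transitivity (hadd (hscal C1 x) (hscal (RtoC (-1)) x)).
  - rewrite <- hscal_adds, <- (hscal_zero_s x). f_equal. apply Ceq; simpl; ring.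
  - rewrite hscal_one; reflexivity.
Qed.

Lemma hscal_zero_v {H : Hilbert} (a : C) : hscal a (@hzero H) = hzero.
Proof.
  rewrite <- (hscal_zero_s hzero), hscal_assoc. f_equal. apply Ceq; simpl; ring.
Qed.

Lemma hadd_sub {H : Hilbert} (a b : H) : hadd (hsub a b) b = a.
Proof. unfold hsub. rewrite <- hadd_assoc, (hadd_comm (hopp b)), hadd_opp, hadd_zero. reflexivity. Qed.

Lemma hsub_self {H : Hilbert} (a : H) : hsub a a = hzero.
Proof. apply hadd_opp. Qed.

Lemma hsub_zero {H : Hilbert} (a : H) : hsub a hzero = a.
Proof. pose proof (hadd_sub a hzero) as E. rewrite hadd_zero in E. exact E. Qed.

Lemma hinner_zero_l {H : Hilbert} (y : H) : hinner hzero y = C0.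
Proof.
  rewrite <- (hscal_zero_s y), hinner_scall. apply Ceq; simpl; ring.
Qed.

Lemma hinner_zero_r {H : Hilbert} (y : H) : hinner y hzero = C0.
Proof. rewrite hinner_sym, hinner_zero_l. apply Ceq; simpl; ring. Qed.

Lemma hinner_addr {H : Hilbert} (x y z : H) :
  hinner x (hadd y z) = Cadd (hinner x y) (hinner x z).
Proof.
  rewrite hinner_sym, hinner_addl, (hinner_sym y x), (hinner_sym z x).
  apply Ceq; simpl; ring.
Qed.

Lemma hinner_scalr {H : Hilbert} (a : C) (x y : H) :
  hinner x (hscal a y) = Cmul (Cconj a) (hinner x y).
Proof.
  rewrite hinner_sym, hinner_scall, (hinner_sym y x). apply Ceq; simpl; ring.
Qed.

Lemma Im_self {H : Hilbert} (x : H) : Im (hinner x x) = 0.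
Proof.
  pose proof (hinner_sym x x) as E. destruct (hinner x x) as [a b]; simpl in *.
  injection E; intros; lra.
Qed.

Definition rinner {H : Hilbert} (x y : H) : R := Re (hinner x y).

Lemma rinner_addl {H : Hilbert} (x y z : H) : rinner (hadd x y) z = rinner x z + rinner y z.
Proof. unfold rinner; rewrite hinner_addl; reflexivity. Qed.
Lemma rinner_addr {H : Hilbert} (x y z : H) : rinner x (hadd y z) = rinner x y + rinner x z.
Proof. unfold rinner; rewrite hinner_addr; reflexivity. Qed.
Lemma rinner_sym {H : Hilbert} (x y : H) : rinner x y = rinner y x.
Proof. unfold rinner; rewrite hinner_sym; reflexivity. Qed.
Lemma rinner_scall {H : Hilbert} (t : R) (x y : H) :
  rinner (hscal (RtoC t) x) y = t * rinner x y.
Proof. unfold rinner; rewrite hinner_scall; simpl; ring. Qed.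
Lemma rinner_scalr {H : Hilbert} (t : R) (x y : H) :
  rinner x (hscal (RtoC t) y) = t * rinner x y.
Proof. rewrite rinner_sym, rinner_scall, rinner_sym; reflexivity. Qed.
Lemma rinner_oppl {H : Hilbert} (x y : H) : rinner (hopp x) y = - rinner x y.
Proof. rewrite hopp_scal, rinner_scall; ring. Qed.
Lemma rinner_oppr {H : Hilbert} (x y : H) : rinner x (hopp y) = - rinner x y.
Proof. rewrite hopp_scal, rinner_scalr; ring. Qed.
Lemma rinner_subl {H : Hilbert} (x y z : H) : rinner (hsub x y) z = rinner x z - rinner y z.
Proof. unfold hsub; rewrite rinner_addl, rinner_oppl; ring. Qed.
Lemma rinner_subr {H : Hilbert} (x y z : H) : rinner z (hsub x y) = rinner z x - rinner z y.
Proof. unfold hsub; rewrite rinner_addr, rinner_oppr; ring. Qed.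
Lemma rinner_pos {H : Hilbert} (x : H) : 0 <= rinner x x.
Proof. apply hinner_pos. Qed.
Lemma rinner_def {H : Hilbert} (x : H) : rinner x x = 0 -> x = hzero.
Proof.
  intros E. apply hinner_def. apply Ceq; [exact E| apply Im_self].
Qed.
Lemma rinner_zero_r {H : Hilbert} (x : H) : rinner x hzero = 0.
Proof. unfold rinner; rewrite hinner_zero_r; reflexivity. Qed.
Lemma rinner_zero_l {H : Hilbert} (x : H) : rinner hzero x = 0.
Proof. unfold rinner; rewrite hinner_zero_l; reflexivity. Qed.

Lemma hnorm_sq {H : Hilbert} (x : H) : hnorm x * hnorm x = rinner x x.
Proof. unfold hnorm. apply sqrt_sqrt, rinner_pos. Qed.
Lemma hnorm_pos {H : Hilbert} (x : H) : 0 <= hnorm x.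
Proof. apply sqrt_pos. Qed.

Lemma CS {H : Hilbert} (x y : H) : Rabs (rinner x y) <= hnorm x * hnorm y.
Proof.
  set (r := rinner x y). set (a := rinner x x). set (b := rinner y y).
  assert (Q : forall t, 0 <= a + 2 * t * r + t * t * b).
  { intros t. pose proof (rinner_pos (hadd x (hscal (RtoC t) y))) as P.
    rewrite rinner_addl, !rinner_addr, !rinner_scall, !rinner_scalr in P.
    rewrite (rinner_sym y x) in P. unfold r, a, b. nra. }
  assert (Hr : r * r <= a * b).
  { destruct (Req_dec b 0) as [Hb|Hb].
    - assert (y = hzero) by (apply rinner_def; exact Hb). subst y.
      unfold r; rewrite rinner_zero_r. pose proof (rinner_pos x). unfold a. nra.
    - assert (0 < b) by (pose proof (rinner_pos y); unfold b in *; lra).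
      specialize (Q (- r / b)).
      assert (E : a + 2 * (- r / b) * r + (- r / b) * (- r / b) * b = (a * b - r * r) / b)
        by (field; lra).
      rewrite E in Q.
      assert (0 <= a * b - r * r).
      { apply (Rmult_le_compat_r b) in Q; [|lra].
        replace ((a * b - r * r) / b * b) with (a*b - r*r) in Q by (field; lra). lra. }
      lra. }
  pose proof (hnorm_pos x). pose proof (hnorm_pos y).
  pose proof (hnorm_sq x) as Ex. pose proof (hnorm_sq y) as Ey. fold a b in Ex, Ey.
  assert (Rabs r * Rabs r <= (hnorm x * hnorm y) * (hnorm x * hnorm y)).
  { rewrite <- Rabs_mult. rewrite Rabs_pos_eq by nra. nra. }
  apply Rsqr_incr_0_var; unfold Rsqr; [lra | nra].
Qed.

Lemma hnorm_triangle {H : Hilbert} (x y : H) : hnorm (hadd x y) <= hnorm x + hnorm y.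
Proof.
  pose proof (CS x y). pose proof (hnorm_pos x). pose proof (hnorm_pos y).
  pose proof (hnorm_pos (hadd x y)).
  assert (E : hnorm (hadd x y) * hnorm (hadd x y) = hnorm x * hnorm x + 2 * rinner x y + hnorm y * hnorm y).
  { rewrite !hnorm_sq, rinner_addl, !rinner_addr, (rinner_sym y x). ring. }
  pose proof (Rle_abs (rinner x y)).
  apply Rsqr_incr_0_var; unfold Rsqr; nra.
Qed.

Definition Cabs (a : C) : R := sqrt (Re a * Re a + Im a * Im a).

Lemma hnorm_scal {H : Hilbert} (a : C) (x : H) : hnorm (hscal a x) = Cabs a * hnorm x.
Proof.
  unfold hnorm, Cabs. rewrite <- sqrt_mult.
  - f_equal. unfold rinner. rewrite hinner_scall, hinner_scalr.
    pose proof (Im_self x). destruct (hinner x x) as [u v]; simpl in *. subst v. ring.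
  - nra.
  - apply rinner_pos.
Qed.

Lemma Cabs_RtoC (t : R) : Cabs (RtoC t) = Rabs t.
Proof. unfold Cabs; simpl. replace (t * t + 0 * 0) with (t * t) by ring. apply sqrt_Rsqr_abs. Qed.

Lemma hnorm_opp {H : Hilbert} (x : H) : hnorm (hopp x) = hnorm x.
Proof. rewrite hopp_scal, hnorm_scal, Cabs_RtoC. rewrite Rabs_left by lra. ring. Qed.

Lemma hopp_hadd {H : Hilbert} (x y : H) : hopp (hadd x y) = hadd (hopp x) (hopp y).
Proof. rewrite !hopp_scal, hscal_addv; reflexivity. Qed.
Lemma hopp_hopp {H : Hilbert} (x : H) : hopp (hopp x) = x.
Proof. rewrite !hopp_scal, hscal_assoc. rewrite <- (hscal_one x) at 2. f_equal. apply Ceq; simpl; ring. Qed.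

Lemma hsub_sym {H : Hilbert} (x y : H) : hsub x y = hopp (hsub y x).
Proof. unfold hsub. rewrite hopp_hadd, hopp_hopp, hadd_comm; reflexivity. Qed.

Lemma hnorm_sub_sym {H : Hilbert} (x y : H) : hnorm (hsub x y) = hnorm (hsub y x).
Proof. rewrite hsub_sym, hnorm_opp; reflexivity. Qed.

Lemma hsub_triangle {H : Hilbert} (x y z : H) : hnorm (hsub x z) <= hnorm (hsub x y) + hnorm (hsub y z).
Proof.
  replace (hsub x z) with (hadd (hsub x y) (hsub y z)). apply hnorm_triangle.
  unfold hsub. rewrite <- hadd_assoc, (hadd_assoc (hopp y) y), (hadd_comm (hopp y) y), hadd_opp, hzero_add.
  reflexivity.
Qed.

Lemma hnorm_zero {H : Hilbert} : hnorm (@hzero H) = 0.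
Proof. unfold hnorm, rinner. rewrite hinner_zero_l. simpl. apply sqrt_0. Qed.

Lemma hnorm_eq0 {H : Hilbert} (x : H) : hnorm x = 0 -> x = hzero.
Proof. intros E. apply rinner_def. rewrite <- hnorm_sq, E. ring. Qed.

Definition Ci : C := mkC 0 1.
Lemma Im_rinner {H : Hilbert} (x y : H) : Im (hinner x y) = rinner x (hscal Ci y).
Proof. unfold rinner. rewrite hinner_scalr. simpl. ring. Qed.

Lemma hnorm_scal_real {H : Hilbert} (t : R) (x : H) : hnorm (hscal (RtoC t) x) = Rabs t * hnorm x.
Proof. rewrite hnorm_scal, Cabs_RtoC; reflexivity. Qed.

Lemma Cabs_pos (a : C) : 0 <= Cabs a.
Proof. apply sqrt_pos. Qed.

Lemma hsub_hadd {H : Hilbert} (a b c d : H) :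
  hsub (hadd a b) (hadd c d) = hadd (hsub a c) (hsub b d).
Proof.
  unfold hsub. rewrite hopp_hadd. rewrite !hadd_assoc. f_equal.
  rewrite <- !hadd_assoc. f_equal. apply hadd_comm.
Qed.

Lemma hsub_scal {H : Hilbert} (a : C) (x y : H) : hsub (hscal a x) (hscal a y) = hscal a (hsub x y).
Proof.
  unfold hsub. rewrite hscal_addv. f_equal. rewrite !hopp_scal, !hscal_assoc. f_equal.
  apply Ceq; simpl; ring.
Qed.

Definition hconv {H : Hilbert} (u : nat -> H) (l : H) : Prop :=
  forall eps, 0 < eps -> exists N, forall n, (N <= n)%nat -> hnorm (hsub (u n) l) < eps.
Definition rconv (a : nat -> R) (l : R) : Prop :=
  forall eps, 0 < eps -> exists N, forall n, (N <= n)%nat -> Rabs (a n - l) < eps.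

Lemma hconv_const {H : Hilbert} (l : H) : hconv (fun _ => l) l.
Proof. intros e He; exists O; intros; rewrite hsub_self, hnorm_zero; lra. Qed.

Lemma hconv_add {H : Hilbert} (u v : nat -> H) l m :
  hconv u l -> hconv v m -> hconv (fun n => hadd (u n) (v n)) (hadd l m).
Proof.
  intros Hu Hv e He. destruct (Hu (e/2)) as [N1 H1]; [lra|]. destruct (Hv (e/2)) as [N2 H2]; [lra|].
  exists (Nat.max N1 N2). intros n Hn. rewrite hsub_hadd.
  eapply Rle_lt_trans; [apply hnorm_triangle|].
  specialize (H1 n ltac:(lia)); specialize (H2 n ltac:(lia)); lra.
Qed.

Lemma hconv_scal {H : Hilbert} (a : C) (u : nat -> H) l :
  hconv u l -> hconv (fun n => hscal a (u n)) (hscal a l).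
Proof.
  intros Hu e He. destruct (Hu (e / (Cabs a + 1))) as [N HN].
  { apply Rdiv_lt_0_compat; [lra|]. pose proof (Cabs_pos a); lra. }
  exists N. intros n Hn. rewrite hsub_scal, hnorm_scal. specialize (HN n Hn).
  pose proof (Cabs_pos a). pose proof (hnorm_pos (hsub (u n) l)).
  apply Rmult_lt_compat_l with (r := Cabs a + 1) in HN; [|lra].
  replace ((Cabs a + 1) * (e / (Cabs a + 1))) with e in HN by (field; lra). nra.
Qed.

Definition BL {H : Hilbert} (f : H -> H) : Prop :=
  (forall x y, f (hsub x y) = hsub (f x) (f y)) /\ exists c, forall x, hnorm (f x) <= c * hnorm x.

Lemma hconv_BL {H : Hilbert} (f : H -> H) (u : nat -> H) l :
  BL f -> hconv u l -> hconv (fun n => f (u n)) (f l).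
Proof.
  intros [Hl [c Hc]] Hu e He. destruct (Hu (e / (Rabs c + 1))) as [N HN].
  { apply Rdiv_lt_0_compat; [lra|]. pose proof (Rabs_pos c); lra. }
  exists N. intros n Hn. rewrite <- Hl. specialize (HN n Hn).
  pose proof (Rabs_pos c). pose proof (hnorm_pos (hsub (u n) l)).
  eapply Rle_lt_trans; [apply Hc|].
  apply Rmult_lt_compat_l with (r := Rabs c + 1) in HN; [|lra].
  replace ((Rabs c + 1) * (e / (Rabs c + 1))) with e in HN by (field; lra).
  pose proof (Rle_abs c). nra.
Qed.

Lemma hconv_bounded {H : Hilbert} (u : nat -> H) l :
  hconv u l -> exists N, forall n, (N <= n)%nat -> hnorm (u n) <= hnorm l + 1.
Proof.
  intros Hu. destruct (Hu 1 ltac:(lra)) as [N HN]. exists N. intros n Hn.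
  specialize (HN n Hn). pose proof (hnorm_triangle (hsub (u n) l) l). rewrite hadd_sub in H0. lra.
Qed.

Lemma rconv_inner {H : Hilbert} (u v : nat -> H) l m :
  hconv u l -> hconv v m -> rconv (fun n => rinner (u n) (v n)) (rinner l m).
Proof.
  intros Hu Hv e He.
  destruct (hconv_bounded v m Hv) as [N0 H0].
  set (K := hnorm m + hnorm l + 1).
  assert (HK : 0 < K) by (unfold K; pose proof (hnorm_pos m); pose proof (hnorm_pos l); lra).
  destruct (Hu (e / (4*K))) as [N1 H1]. { apply Rdiv_lt_0_compat; lra. }
  destruct (Hv (e / (4*K))) as [N2 H2]. { apply Rdiv_lt_0_compat; lra. }
  exists (Nat.max N0 (Nat.max N1 N2)). intros n Hn.
  specialize (H0 n ltac:(lia)); specialize (H1 n ltac:(lia)); specialize (H2 n ltac:(lia)).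
  replace (rinner (u n) (v n) - rinner l m) with
    (rinner (hsub (u n) l) (v n) + rinner l (hsub (v n) m))
    by (rewrite rinner_subl, rinner_subr; ring).
  eapply Rle_lt_trans; [apply Rabs_triang|].
  pose proof (CS (hsub (u n) l) (v n)). pose proof (CS l (hsub (v n) m)).
  pose proof (hnorm_pos (hsub (u n) l)). pose proof (hnorm_pos (hsub (v n) m)).
  pose proof (hnorm_pos (v n)). pose proof (hnorm_pos l). pose proof (hnorm_pos m).
  assert (hnorm (hsub (u n) l) * hnorm (v n) <= e / (4*K) * K).
  { apply Rmult_le_compat; try lra. unfold K; lra. }
  assert (hnorm l * hnorm (hsub (v n) m) <= K * (e / (4*K))).
  { apply Rmult_le_compat; try lra. unfold K; lra. }
  replace (e / (4*K) * K) with (e/4) in * by (field; lra).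
  replace (K * (e / (4*K))) with (e/4) in * by (field; lra).
  lra.
Qed.

Lemma rconv_nonneg (a : nat -> R) l : rconv a l -> (forall n, 0 <= a n) -> 0 <= l.
Proof.
  intros Ha Hp. destruct (Rle_or_lt 0 l) as [|Hl]; auto.
  destruct (Ha (- l) ltac:(lra)) as [N HN]. specialize (HN N (le_n _)). specialize (Hp N).
  apply Rabs_def2 in HN. lra.
Qed.

Lemma rconv_zero (a : nat -> R) l : rconv a l -> (forall n, a n = 0) -> l = 0.
Proof.
  intros Ha Hp. destruct (Req_dec l 0) as [|Hl]; auto.
  destruct (Ha (Rabs l) ltac:(apply Rabs_pos_lt; auto)) as [N HN]. specialize (HN N (le_n _)).
  rewrite Hp in HN. rewrite Rminus_0_l, Rabs_Ropp in HN. lra.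
Qed.

Lemma Cnonneg_lim {H : Hilbert} (u v : nat -> H) l m :
  hconv u l -> hconv v m -> (forall n, Cnonneg (hinner (u n) (v n))) -> Cnonneg (hinner l m).
Proof.
  intros Hu Hv Hn. split.
  - rewrite Im_rinner. apply (rconv_zero (fun n => rinner (u n) (hscal Ci (v n)))).
    + apply rconv_inner; auto. apply hconv_scal; auto.
    + intros n. rewrite <- Im_rinner. apply Hn.
  - apply (rconv_nonneg (fun n => rinner (u n) (v n))).
    + apply rconv_inner; auto.
    + intros n. apply Hn.
Qed.


Definition stepP {H : Hilbert} {I : Type} (psi : I -> H -> R) (k : nat) (c : H) (r : R)
  (p : H * R) : Prop :=
  0 < snd p /\ snd p <= r / 2 /\ snd p <= / (INR k + 1) /\
  (forall z, hnorm (hsub z (fst p)) <= snd p -> hnorm (hsub z c) < r) /\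
  (forall z, hnorm (hsub z (fst p)) <= snd p -> exists i, INR k < Rabs (psi i z)).

Lemma psi_zero {H : Hilbert} (f : H -> R) (Hadd : forall x y, f (hadd x y) = f x + f y) :
  f hzero = 0.
Proof. pose proof (Hadd hzero hzero). rewrite hadd_zero in H0. lra. Qed.

Lemma psi_sub {H : Hilbert} (f : H -> R) (Hadd : forall x y, f (hadd x y) = f x + f y) x y :
  f (hsub x y) = f x - f y.
Proof. pose proof (Hadd (hsub x y) y). rewrite hadd_sub in H0. lra. Qed.

Lemma step_exists {H : Hilbert} {I : Type} (psi : I -> H -> R)
  (Hadd : forall i x y, psi i (hadd x y) = psi i x + psi i y)
  (Hsc : forall i t x, psi i (hscal (RtoC t) x) = t * psi i x)
  (Hlip : forall i, exists L, forall x, Rabs (psi i x) <= L * hnorm x)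
  (NB : forall Cc, exists i x, Cc * hnorm x < Rabs (psi i x)) :
  forall k c r, 0 < r -> exists p, stepP psi k c r p.
Proof.
  intros k c r Hr. set (n := INR k). assert (Hn : 0 <= n) by apply pos_INR.
  destruct (NB (4 * (n + 1) / r)) as [i [w Hw]].
  assert (Hw0 : 0 < hnorm w).
  { destruct (Rle_lt_or_eq_dec 0 (hnorm w) (hnorm_pos w)) as [|E]; auto.
    symmetry in E. apply hnorm_eq0 in E. subst w. rewrite (psi_zero (psi i) (Hadd i)) in Hw.
    rewrite hnorm_zero, Rabs_R0 in Hw. lra. }
  set (s := r / (2 * hnorm w)). assert (Hs : 0 < s) by (unfold s; apply Rdiv_lt_0_compat; lra).
  set (w' := hscal (RtoC s) w).
  assert (Nw' : hnorm w' = r / 2).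
  { unfold w'. rewrite hnorm_scal_real, Rabs_pos_eq by lra. unfold s. field. lra. }
  assert (Pw' : 2 * (n + 1) < Rabs (psi i w')).
  { unfold w'. rewrite Hsc, Rabs_mult, (Rabs_pos_eq s) by lra.
    apply Rmult_lt_compat_l with (r := s) in Hw; auto.
    replace (s * (4 * (n + 1) / r * hnorm w)) with (2 * (n+1)) in Hw; [lra|].
    unfold s. field. lra. }
  assert (Hc' : exists c', hnorm (hsub c' c) <= r / 2 /\ n + 1 < Rabs (psi i c')).
  { destruct (Rlt_or_le (n + 1) (Rabs (psi i c))) as [Hlt|Hle].
    - exists c. rewrite hsub_self, hnorm_zero. split; [lra|auto].
    - exists (hadd c w'). split.
      + unfold hsub. rewrite <- hadd_assoc, (hadd_comm w'), hadd_assoc, hadd_opp, hzero_add. lra.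
      + rewrite Hadd. pose proof (Rabs_triang (psi i c + psi i w') (- psi i c)).
        replace (psi i c + psi i w' + - psi i c) with (psi i w') in H0 by ring.
        rewrite Rabs_Ropp in H0. lra. }
  destruct Hc' as [c' [Hc'1 Hc'2]].
  destruct (Hlip i) as [L HL]. set (L' := Rabs L + 1).
  assert (HL' : 0 < L') by (unfold L'; pose proof (Rabs_pos L); lra).
  set (r' := Rmin (r / 4) (Rmin (/ (2 * L')) (/ (n + 1)))).
  assert (Hr'1 : r' <= r / 4) by apply Rmin_l.
  assert (Hr'2 : r' <= / (2 * L')) by (eapply Rle_trans; [apply Rmin_r| apply Rmin_l]).
  assert (Hr'3 : r' <= / (n + 1)) by (eapply Rle_trans; [apply Rmin_r| apply Rmin_r]).
  assert (Hr'0 : 0 < r').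
  { unfold r'. apply Rmin_pos; [lra|]. apply Rmin_pos; apply Rinv_0_lt_compat; lra. }
  exists (c', r'). unfold stepP; simpl. split; [lra|]. split; [lra|]. split; [exact Hr'3|]. split.
  - intros z Hz. eapply Rle_lt_trans; [apply (hsub_triangle z c' c)|]. lra.
  - intros z Hz. exists i.
    assert (Hd : Rabs (psi i (hsub z c')) <= 1/2).
    { eapply Rle_trans; [apply HL|].
      assert (L * hnorm (hsub z c') <= L' * r').
      { pose proof (hnorm_pos (hsub z c')). pose proof (Rle_abs L). pose proof (Rabs_pos L).
        apply Rle_trans with (Rabs L * hnorm (hsub z c')). apply Rmult_le_compat_r; lra.
        apply Rmult_le_compat; try lra. unfold L'; lra. }
      assert (L' * r' <= L' * / (2 * L')) by (apply Rmult_le_compat_l; lra).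
      replace (L' * / (2 * L')) with (1/2) in H1 by (field; lra). lra. }
    rewrite (psi_sub (psi i) (Hadd i)) in Hd.
    pose proof (Rabs_triang (psi i c' - psi i z) (psi i z)).
    replace (psi i c' - psi i z + psi i z) with (psi i c') in H0 by ring.
    rewrite Rabs_minus_sym in H0. unfold n in *. lra.
Qed.

Lemma UBP {H : Hilbert} {I : Type} (psi : I -> H -> R)
  (Hadd : forall i x y, psi i (hadd x y) = psi i x + psi i y)
  (Hsc : forall i t x, psi i (hscal (RtoC t) x) = t * psi i x)
  (Hlip : forall i, exists L, forall x, Rabs (psi i x) <= L * hnorm x)
  (Hpt : forall x, exists M, forall i, Rabs (psi i x) <= M) :
  exists Cc, forall i x, Rabs (psi i x) <= Cc * hnorm x.
Proof.
  apply NNPP. intros NB0.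
  assert (NB : forall Cc, exists i x, Cc * hnorm x < Rabs (psi i x)).
  { intros Cc. apply NNPP. intros NE. apply NB0. exists Cc. intros i x.
    apply Rnot_lt_le. intros Hlt. apply NE. exists i, x. exact Hlt. }
  pose proof (step_exists psi Hadd Hsc Hlip NB) as Hst.
  pose (f := fun k c r => epsilon (inhabits (@hzero H, 1)) (fun p => 0 < r -> stepP psi k c r p)).
  assert (Hf : forall k c r, 0 < r -> stepP psi k c r (f k c r)).
  { intros k c r Hr. unfold f.
    destruct (Hst k c r Hr) as [p Hp].
    refine (epsilon_spec (inhabits (@hzero H, 1)) (fun p => 0 < r -> stepP psi k c r p) _ Hr).
    exists p; auto. }
  pose (g := fix g (n : nat) : H * R :=
          match n with O => (hzero, 1) | S k => f k (fst (g k)) (snd (g k)) end).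
  assert (Hpos : forall n, 0 < snd (g n)).
  { induction n; simpl; [lra|]. apply (Hf n _ _ IHn). }
  assert (Hgs : forall n, stepP psi n (fst (g n)) (snd (g n)) (g (S n))).
  { intros n. apply Hf, Hpos. }
  assert (Hnest : forall n k, (k <= n)%nat -> forall z,
             hnorm (hsub z (fst (g n))) <= snd (g n) -> hnorm (hsub z (fst (g k))) <= snd (g k)).
  { induction n; intros k Hk z Hz.
    - assert (k = O) by lia. subst; auto.
    - destruct (Nat.eq_dec k (S n)) as [E|E]; [subst; auto|].
      apply (IHn k ltac:(lia)). destruct (Hgs n) as (_ & _ & _ & H4 & _). left; auto. }
  assert (Hsmall : forall n, snd (g (S n)) <= / (INR n + 1)).
  { intros n. destruct (Hgs n) as (_ & _ & H3 & _). exact H3. }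
  assert (Hcauchy : forall eps, 0 < eps -> exists N, forall m n, (N <= m)%nat -> (N <= n)%nat ->
            hnorm (hsub (fst (g m)) (fst (g n))) < eps).
  { intros eps He. destruct (INR_unbounded (2 / eps)) as [N HN].
    exists (S N). intros m n Hm Hn.
    pose proof (Hnest m (S N) Hm (fst (g m)) ltac:(rewrite hsub_self, hnorm_zero; left; apply Hpos)).
    pose proof (Hnest n (S N) Hn (fst (g n)) ltac:(rewrite hsub_self, hnorm_zero; left; apply Hpos)).
    rewrite hnorm_sub_sym in H1.
    pose proof (hsub_triangle (fst (g m)) (fst (g (S N))) (fst (g n))).
    pose proof (Hsmall N). pose proof (pos_INR N).
    assert (/ (INR N + 1) < eps / 2).
    { apply (Rmult_lt_reg_l (INR N + 1)); [lra|]. rewrite Rinv_r by lra.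
      apply (Rmult_lt_reg_l (2 / eps)). apply Rdiv_lt_0_compat; lra.
      replace (2 / eps * ((INR N + 1) * (eps / 2))) with (INR N + 1) by (field; lra). lra. }
    lra. }
  destruct (hcomplete H (fun n => fst (g n)) Hcauchy) as [l Hl].
  change (forall eps, 0 < eps -> exists N, forall n, (N <= n)%nat ->
            hnorm (hsub (fst (g n)) l) < eps) in Hl.
  assert (Hin : forall k, hnorm (hsub l (fst (g k))) <= snd (g k)).
  { intros k. apply Rnot_lt_le. intros Hlt.
    destruct (Hl (hnorm (hsub l (fst (g k))) - snd (g k)) ltac:(lra)) as [N HN].
    specialize (HN (Nat.max N k) ltac:(lia)).
    pose proof (Hnest (Nat.max N k) k ltac:(lia) (fst (g (Nat.max N k)))
                  ltac:(rewrite hsub_self, hnorm_zero; left; apply Hpos)).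
    pose proof (hsub_triangle l (fst (g (Nat.max N k))) (fst (g k))).
    rewrite hnorm_sub_sym in HN. lra. }
  destruct (Hpt l) as [M HM]. destruct (INR_unbounded M) as [k Hk].
  destruct (Hgs k) as (_ & _ & _ & _ & H5). destruct (H5 l (Hin (S k))) as [i Hi].
  specialize (HM i). lra.
Qed.

Lemma le_eps (a b k : R) : 0 <= k -> (forall e, 0 < e -> a <= b + k * e) -> a <= b.
Proof.
  intros Hk Hab. apply Rnot_lt_le. intros Hlt.
  specialize (Hab ((a - b) / (k + 1))). 
  assert (0 < (a - b) / (k + 1)) by (apply Rdiv_lt_0_compat; lra).
  specialize (Hab H).
  assert (k * ((a - b) / (k + 1)) < a - b).
  { apply (Rmult_lt_reg_l (k + 1)); [lra|].
    replace ((k + 1) * (k * ((a - b) / (k + 1)))) with (k * (a - b)) by (field; lra). nra. }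
  lra.
Qed.

Lemma comp_bounded {H : Hilbert} (B : Op H) (S : H -> H) :
  selfadjoint B ->
  (forall w, dom B (S w)) ->
  (forall x y, S (hadd x y) = hadd (S x) (S y)) ->
  (forall a x, S (hscal a x) = hscal a (S x)) ->
  (exists c, forall w, hnorm (S w) <= c * hnorm w) ->
  exists Cc, forall w, hnorm (ap B (S w)) <= Cc * hnorm w.
Proof.
  intros [[B0 [Badd Bsc]] [Bdense [Bsym _]]] HSd HSadd HSsc [c Hc].
  pose (I := {v : H | dom B v /\ hnorm v <= 1}).
  pose (psi := fun (v : I) w => rinner (ap B (S w)) (proj1_sig v)).
  assert (Hadd : forall i x y, psi i (hadd x y) = psi i x + psi i y).
  { intros i x y. unfold psi. rewrite HSadd. rewrite (proj2 (Badd _ _ (HSd x) (HSd y))).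
    apply rinner_addl. }
  assert (Hsc : forall i t x, psi i (hscal (RtoC t) x) = t * psi i x).
  { intros i t x. unfold psi. rewrite HSsc. rewrite (proj2 (Bsc _ _ (HSd x))). apply rinner_scall. }
  assert (Hsym : forall i w, psi i w = rinner (S w) (ap B (proj1_sig i))).
  { intros [v [Hv Hv1]] w. unfold psi, rinner; simpl. rewrite Bsym; auto. }
  assert (Hlip : forall i, exists L, forall x, Rabs (psi i x) <= L * hnorm x).
  { intros i. exists (c * hnorm (ap B (proj1_sig i))). intros x. rewrite Hsym.
    eapply Rle_trans; [apply CS|]. pose proof (hnorm_pos (ap B (proj1_sig i))).
    specialize (Hc x). nra. }
  assert (Hpt : forall x, exists M, forall i, Rabs (psi i x) <= M).
  { intros x. exists (hnorm (ap B (S x))). intros [v [Hv Hv1]]. unfold psi; simpl.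
    eapply Rle_trans; [apply CS|]. pose proof (hnorm_pos (ap B (S x))). pose proof (hnorm_pos v). nra. }
  destruct (UBP psi Hadd Hsc Hlip Hpt) as [Cc HCc].
  exists (Rabs Cc). intros w. set (u := ap B (S w)).
  assert (Hv : forall v, dom B v -> Rabs (rinner u v) <= Rabs Cc * hnorm w * hnorm v).
  { intros v Dv. destruct (Req_dec (hnorm v) 0) as [E|E].
    - apply hnorm_eq0 in E. subst v. rewrite rinner_zero_r, hnorm_zero, Rabs_R0. lra.
    - pose proof (hnorm_pos v). set (t := / hnorm v).
      assert (Dv' : dom B (hscal (RtoC t) v)) by (apply Bsc; auto).
      assert (Nv' : hnorm (hscal (RtoC t) v) <= 1).
      { rewrite hnorm_scal_real, Rabs_pos_eq. unfold t. rewrite Rinv_l; lra.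
        unfold t. left. apply Rinv_0_lt_compat. lra. }
      specialize (HCc (exist _ _ (conj Dv' Nv')) w). unfold psi in HCc; simpl in HCc.
      fold u in HCc. rewrite rinner_scalr, Rabs_mult, (Rabs_pos_eq t) in HCc.
      2:{ unfold t. left. apply Rinv_0_lt_compat. lra. }
      apply Rmult_le_compat_l with (r := hnorm v) in HCc; [|lra].
      replace (hnorm v * (t * Rabs (rinner u v))) with (Rabs (rinner u v)) in HCc
        by (unfold t; field; lra).
      pose proof (Rle_abs Cc). pose proof (hnorm_pos w).
      assert (0 <= (Rabs Cc - Cc) * (hnorm w * hnorm v)) by (apply Rmult_le_pos; nra).
      nra. }
  pose proof (hnorm_pos u). pose proof (hnorm_pos w). pose proof (Rabs_pos Cc).
  assert (Hsq : hnorm u * hnorm u <= Rabs Cc * hnorm w * hnorm u).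
  { apply (le_eps _ _ (Rabs Cc * hnorm w + hnorm u)); [nra|]. intros e He.
    destruct (Bdense u e He) as [v [Dv Hve]].
    rewrite hnorm_sq.
    replace (rinner u u) with (rinner u v + rinner u (hsub u v)) by (rewrite rinner_subr; ring).
    pose proof (Hv v Dv). pose proof (CS u (hsub u v)).
    pose proof (Rle_abs (rinner u v)). pose proof (Rle_abs (rinner u (hsub u v))).
    pose proof (hsub_triangle v u hzero) as T5. rewrite !hsub_zero in T5.
    rewrite hnorm_sub_sym in T5. pose proof (hnorm_pos (hsub u v)).
    assert (Rabs Cc * hnorm w * hnorm v <= Rabs Cc * hnorm w * (hnorm u + e)).
    { apply Rmult_le_compat_l; nra. }
    assert (hnorm u * hnorm (hsub u v) <= hnorm u * e) by (apply Rmult_le_compat_l; lra).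
    nra. }
  destruct (Req_dec (hnorm u) 0) as [E|E]; [rewrite E; nra|].
  apply (Rmult_le_reg_r (hnorm u)); [lra|]. lra.
Qed.


Lemma linear_opmul {H : Hilbert} (S T : Op H) :
  linear_op S -> linear_op T -> linear_op (opmul S T).
Proof.
  intros [S0 [Sa Ss]] [T0 [Ta Ts]]. unfold opmul; split; [|split]; simpl.
  - split; auto.
    assert (E : ap T hzero = hzero).
    { pose proof (proj2 (Ts C0 hzero T0)). rewrite hscal_zero_s in H0. rewrite H0, hscal_zero_s. reflexivity. }
    rewrite E; auto.
  - intros x y [Tx Sx] [Ty Sy]. destruct (Ta x y Tx Ty) as [Txy E]. rewrite E.
    destruct (Sa _ _ Sx Sy) as [Sxy E2]. auto.
  - intros a x [Tx Sx]. destruct (Ts a x Tx) as [Tax E]. rewrite E.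
    destruct (Ss a _ Sx) as [Sax E2]. auto.
Qed.

Lemma linear_opid (H : Hilbert) : linear_op (opid H).
Proof. unfold opid, linear_op; simpl; repeat split; auto. Qed.

Lemma linear_oppow {H : Hilbert} (T : Op H) k : linear_op T -> linear_op (oppow T k).
Proof. intros HT. induction k; simpl. apply linear_opid. apply linear_opmul; auto. Qed.

Lemma lin_ap_zero {H : Hilbert} (T : Op H) : linear_op T -> ap T hzero = hzero.
Proof.
  intros [T0 [_ Ts]]. pose proof (proj2 (Ts C0 hzero T0)). rewrite hscal_zero_s in H0.
  rewrite H0, hscal_zero_s. reflexivity.
Qed.

Lemma lin_add {H : Hilbert} (T : Op H) x y : linear_op T -> dom T x -> dom T y ->
  dom T (hadd x y) /\ ap T (hadd x y) = hadd (ap T x) (ap T y).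
Proof. intros [_ [Ta _]]; auto. Qed.
Lemma lin_scal {H : Hilbert} (T : Op H) a x : linear_op T -> dom T x ->
  dom T (hscal a x) /\ ap T (hscal a x) = hscal a (ap T x).
Proof. intros [_ [_ Ts]]; auto. Qed.
Lemma lin_opp {H : Hilbert} (T : Op H) x : linear_op T -> dom T x ->
  dom T (hopp x) /\ ap T (hopp x) = hopp (ap T x).
Proof. intros HT Hx. rewrite !hopp_scal. apply lin_scal; auto. Qed.
Lemma lin_sub {H : Hilbert} (T : Op H) x y : linear_op T -> dom T x -> dom T y ->
  dom T (hsub x y) /\ ap T (hsub x y) = hsub (ap T x) (ap T y).
Proof.
  intros HT Hx Hy. destruct (lin_opp T y HT Hy) as [D E]. unfold hsub.
  destruct (lin_add T x (hopp y) HT Hx D) as [D2 E2]. rewrite E2, E. auto.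
Qed.

Lemma dom_pow_mono {H : Hilbert} (T : Op H) k j x :
  dom (oppow T k) x -> (j <= k)%nat -> dom (oppow T j) x.
Proof.
  revert j x. induction k; intros j x Hx Hj.
  - assert (j = O) by lia. subst. exact Hx.
  - destruct j; simpl; [exact I|]. simpl in Hx. destruct Hx. split; auto.
    apply IHk; auto. lia.
Qed.

Lemma swap {H : Hilbert} (A G : Op H) k : forall x, dom G x ->
  (dom (oppow (opmul G A) k) (ap G x) <->
     dom (oppow (opmul A G) k) x /\ dom G (ap (oppow (opmul A G) k) x)) /\
  (dom (oppow (opmul G A) k) (ap G x) ->
     ap (oppow (opmul G A) k) (ap G x) = ap G (ap (oppow (opmul A G) k) x)).
Proof.
  induction k; intros x Gx.
  - simpl. split; [tauto| reflexivity].
  - simpl. set (x' := ap A (ap G x)).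
    split.
    + split.
      * intros [[D1 D2] D3]. destruct (IHk x' D2) as [IH _].
        destruct (proj1 IH D3). auto.
      * intros [[[_ D1] D2] D3].
        assert (Gx' : dom G x').
        { destruct k; simpl in *; [exact D3| tauto]. }
        destruct (IHk x' Gx') as [IH _]. split; [auto|]. apply IH; auto.
    + intros [[D1 D2] D3]. destruct (IHk x' D2) as [_ IH2]. apply IH2; auto.
Qed.

Lemma hsum_ext {H : Hilbert} (f g : nat -> H) d :
  (forall k, (k <= d)%nat -> f k = g k) -> hsum_upto f d = hsum_upto g d.
Proof.
  induction d; intros E; simpl.
  - apply E; lia.
  - rewrite IHd by (intros; apply E; lia). rewrite E by lia. reflexivity.
Qed.

Lemma hsum_shift {H : Hilbert} (f : nat -> H) d :
  hsum_upto f (S d) = hadd (f O) (hsum_upto (fun k => f (S k)) d).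
Proof.
  induction d; simpl; [reflexivity|]. simpl in IHd. rewrite IHd. rewrite hadd_assoc. reflexivity.
Qed.

Lemma lin_hsum {H : Hilbert} (G : Op H) (f : nat -> H) d : linear_op G ->
  (forall k, (k <= d)%nat -> dom G (f k)) ->
  dom G (hsum_upto f d) /\ ap G (hsum_upto f d) = hsum_upto (fun k => ap G (f k)) d.
Proof.
  intros HG. induction d; intros Hf; simpl.
  - split; [apply Hf; lia| reflexivity].
  - destruct IHd as [D E]. { intros; apply Hf; lia. }
    destruct (lin_add G _ _ HG D (Hf (S d) (le_n _))) as [D2 E2]. rewrite E2, E. auto.
Qed.

Lemma hconv_hsum {H : Hilbert} (u : nat -> nat -> H) (l : nat -> H) d :
  (forall k, (k <= d)%nat -> hconv (fun n => u n k) (l k)) ->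
  hconv (fun n => hsum_upto (u n) d) (hsum_upto l d).
Proof.
  induction d; intros Hu; simpl.
  - apply Hu; lia.
  - apply hconv_add. apply IHd; intros; apply Hu; lia. apply Hu; lia.
Qed.

Definition Peval {H : Hilbert} (T : Op H) (p : nat -> R) (d : nat) (x : H) : H :=
  hsum_upto (fun k => hscal (RtoC (p k)) (ap (oppow T k) x)) d.

Lemma shared {H : Hilbert} (A G : Op H) (p : nat -> R) d x :
  selfadjoint G -> dom G x -> dom (oppow (opmul G A) d) (ap G x) ->
  hinner (Peval (opmul G A) p d (ap G x)) x = hinner (Peval (opmul A G) p d x) (ap G x).
Proof.
  intros [HG [_ [Gsym _]]] Gx D.
  assert (Hk : forall k, (k <= d)%nat ->
     dom G (hscal (RtoC (p k)) (ap (oppow (opmul A G) k) x)) /\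
     hscal (RtoC (p k)) (ap (oppow (opmul G A) k) (ap G x)) =
     ap G (hscal (RtoC (p k)) (ap (oppow (opmul A G) k) x))).
  { intros k Hk. pose proof (dom_pow_mono _ _ _ _ D Hk) as Dk.
    destruct (swap A G k x Gx) as [[S1 _] S2]. destruct (S1 Dk) as [_ DG].
    destruct (lin_scal G (RtoC (p k)) _ HG DG) as [D3 E3]. rewrite E3, S2 by auto. auto. }
  unfold Peval. rewrite (hsum_ext _ (fun k => ap G (hscal (RtoC (p k)) (ap (oppow (opmul A G) k) x))))
    by (intros k Hk'; apply Hk; auto).
  destruct (lin_hsum G (fun k => hscal (RtoC (p k)) (ap (oppow (opmul A G) k) x)) d HG)
    as [DS ES]. { intros k Hk'; apply Hk; auto. }
  rewrite <- ES. apply Gsym; auto.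
Qed.


Lemma hscal_comm {H : Hilbert} (a b : C) (x : H) : hscal a (hscal b x) = hscal b (hscal a x).
Proof. rewrite !hscal_assoc. f_equal. apply Ceq; simpl; ring. Qed.

Lemma resolvent {H : Hilbert} (T : Op H) (l : C) : linear_op T -> in_rho T l ->
  exists Rf : H -> H,
    (forall z, dom T (Rf z) /\ hsub (ap T (Rf z)) (hscal l (Rf z)) = z) /\
    (forall x, dom T x -> Rf (hsub (ap T x) (hscal l x)) = x) /\
    (forall x y, Rf (hadd x y) = hadd (Rf x) (Rf y)) /\
    (forall a x, Rf (hscal a x) = hscal a (Rf x)) /\
    (exists c, forall z, hnorm (Rf z) <= c * hnorm z).
Proof.
  intros HT [Inj [Sur [c Bd]]].
  pose (Rf := fun z => epsilon (inhabits (@hzero H)) (fun x => dom T x /\ hsub (ap T x) (hscal l x) = z)).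
  assert (H1 : forall z, dom T (Rf z) /\ hsub (ap T (Rf z)) (hscal l (Rf z)) = z).
  { intros z. unfold Rf. apply epsilon_spec. apply Sur. }
  assert (H2 : forall x, dom T x -> Rf (hsub (ap T x) (hscal l x)) = x).
  { intros x Dx. destruct (H1 (hsub (ap T x) (hscal l x))) as [D E]. apply Inj; auto. }
  exists Rf. split; [exact H1|]. split; [exact H2|]. split; [|split].
  - intros x y. destruct (H1 x) as [Dx Ex]. destruct (H1 y) as [Dy Ey].
    destruct (lin_add T _ _ HT Dx Dy) as [D E].
    rewrite <- (H2 (hadd (Rf x) (Rf y))) by auto. f_equal.
    rewrite E, hscal_addv, hsub_hadd, Ex, Ey. reflexivity.
  - intros a x. destruct (H1 x) as [Dx Ex].
    destruct (lin_scal T a _ HT Dx) as [D E].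
    rewrite <- (H2 (hscal a (Rf x))) by auto. f_equal.
    rewrite E, hscal_comm, hsub_scal, Ex. reflexivity.
  - exists c. intros z. destruct (H1 z) as [D E]. rewrite <- E at 2. apply Bd; auto.
Qed.

Lemma hsub_eq {H : Hilbert} (u v z : H) : hsub u v = z -> u = hadd z v.
Proof. intros E. subst z. rewrite hadd_sub. reflexivity. Qed.

Lemma dense_seq {H : Hilbert} (D : H -> Prop) : dense D -> forall w,
  exists u : nat -> H, (forall n, D (u n)) /\ hconv u w.
Proof.
  intros HD w.
  pose (u := fun n : nat => epsilon (inhabits (@hzero H))
               (fun v => D v /\ hnorm (hsub w v) < / (INR n + 1))).
  assert (Hu : forall n, D (u n) /\ hnorm (hsub w (u n)) < / (INR n + 1)).
  { intros n. unfold u. apply epsilon_spec. apply HD. apply Rinv_0_lt_compat.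
    pose proof (pos_INR n); lra. }
  exists u. split; [intros n; apply Hu|].
  intros e He. destruct (INR_unbounded (/ e)) as [N HN]. exists N. intros n Hn.
  rewrite hnorm_sub_sym. eapply Rlt_trans; [apply Hu|].
  apply le_INR in Hn. pose proof (pos_INR N).
  assert (0 < / e) by (apply Rinv_0_lt_compat; lra).
  rewrite <- (Rinv_inv e). apply Rinv_lt_contravar; [nra| lra].
Qed.

Lemma BL_of {H : Hilbert} (f : H -> H) :
  (forall x y, f (hadd x y) = hadd (f x) (f y)) -> (forall a x, f (hscal a x) = hscal a (f x)) ->
  (exists c, forall x, hnorm (f x) <= c * hnorm x) -> BL f.
Proof.
  intros Ha Hs Hb. split; auto. intros x y. unfold hsub. rewrite Ha, !hopp_scal, Hs. reflexivity.
Qed.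

Lemma hconv_unique_rewrite {H : Hilbert} (u : nat -> H) l l' : hconv u l -> l = l' -> hconv u l'.
Proof. intros; subst; auto. Qed.

Lemma hconv_ext {H : Hilbert} (u v : nat -> H) l : hconv u l -> (forall n, u n = v n) -> hconv v l.
Proof. intros Hu E e He. destruct (Hu e He) as [N HN]. exists N. intros n Hn. rewrite <- E. auto. Qed.

Lemma part_a0 {H : Hilbert} (A G : Op H) (p0 : R) :
  selfadjoint A -> selfadjoint G -> rho_nonempty (opmul G A) ->
  (forall y, dom (opmul A G) y -> Cnonneg (hinner (hscal (RtoC p0) y) (ap G y))) ->
  forall x, dom (opmul G A) x -> Cnonneg (hinner (hscal (RtoC p0) (ap A x)) (ap G (ap A x))).
Proof.
  intros SA SG [mu Hmu] Hyp x Dx.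
  assert (LA : linear_op A) by apply SA. assert (LG : linear_op G) by apply SG.
  assert (LT : linear_op (opmul G A)) by (apply linear_opmul; auto).
  destruct (resolvent _ _ LT Hmu) as [S [S1 [S2 [S3 [S4 S5]]]]].
  assert (DAS : forall w, dom A (S w)) by (intros w; apply (S1 w)).
  destruct (comp_bounded A S SA DAS S3 S4 S5) as [K HK].
  assert (BLS : BL S) by (apply BL_of; auto).
  assert (BLAS : BL (fun w => ap A (S w))).
  { apply BL_of.
    - intros u v. rewrite S3. apply (lin_add A _ _ LA (DAS u) (DAS v)).
    - intros a u. rewrite S4. apply (lin_scal A _ _ LA (DAS u)).
    - exists K; auto. }
  set (w := hsub (ap (opmul G A) x) (hscal mu x)).
  assert (Sw : S w = x) by (apply S2; auto).
  destruct (dense_seq (dom A) (proj1 (proj2 SA)) w) as [ws [Dws Cws]].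
  assert (GAx : forall n, ap G (ap A (S (ws n))) = hadd (ws n) (hscal mu (S (ws n)))).
  { intros n. apply hsub_eq. apply (S1 (ws n)). }
  apply (Cnonneg_lim (fun n => hscal (RtoC p0) (ap A (S (ws n)))) (fun n => hadd (ws n) (hscal mu (S (ws n))))).
  - apply hconv_scal. rewrite <- Sw. apply (hconv_BL (fun w => ap A (S w))); auto.
  - replace (ap G (ap A x)) with (hadd w (hscal mu (S w))).
    + apply hconv_add; auto. apply hconv_scal. apply hconv_BL; auto.
    + rewrite Sw. unfold w. rewrite hadd_sub. reflexivity.
  - intros n. rewrite <- GAx. apply Hyp. simpl. split.
    + apply (S1 (ws n)).
    + rewrite GAx. apply (lin_add A _ _ LA (Dws n)). apply (lin_scal A _ _ LA (DAS _)).
Qed.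

Fixpoint fiter {H : Hilbert} (f : H -> H) (j : nat) (w : H) : H :=
  match j with O => w | S j => f (fiter f j w) end.

Lemma BL_id {H : Hilbert} : BL (fun x : H => x).
Proof. split; auto. exists 1. intros; lra. Qed.

Lemma BL_comp {H : Hilbert} (f g : H -> H) : BL f -> BL g -> BL (fun x => f (g x)).
Proof.
  intros [Hf [cf Cf]] [Hg [cg Cg]]. split.
  - intros x y. rewrite Hg, Hf. reflexivity.
  - exists (Rabs cf * Rabs cg). intros x. eapply Rle_trans; [apply Cf|].
    pose proof (Cg x). pose proof (hnorm_pos x). pose proof (hnorm_pos (g x)).
    pose proof (Rle_abs cf). pose proof (Rle_abs cg). pose proof (Rabs_pos cf). pose proof (Rabs_pos cg).
    apply Rle_trans with (Rabs cf * hnorm (g x)). apply Rmult_le_compat_r; lra.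
    rewrite Rmult_assoc. apply Rmult_le_compat_l; [lra|].
    apply Rle_trans with (cg * hnorm x); [lra|]. apply Rmult_le_compat_r; lra.
Qed.

Lemma BL_add {H : Hilbert} (f g : H -> H) : BL f -> BL g -> BL (fun x => hadd (f x) (g x)).
Proof.
  intros [Hf [cf Cf]] [Hg [cg Cg]]. split.
  - intros x y. rewrite Hf, Hg, hsub_hadd. reflexivity.
  - exists (Rabs cf + Rabs cg). intros x. eapply Rle_trans; [apply hnorm_triangle|].
    pose proof (Cf x). pose proof (Cg x). pose proof (hnorm_pos x).
    pose proof (Rle_abs cf). pose proof (Rle_abs cg).
    assert (cf * hnorm x <= Rabs cf * hnorm x) by (apply Rmult_le_compat_r; lra).
    assert (cg * hnorm x <= Rabs cg * hnorm x) by (apply Rmult_le_compat_r; lra). nra.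
Qed.

Lemma BL_scal {H : Hilbert} (a : C) (f : H -> H) : BL f -> BL (fun x => hscal a (f x)).
Proof.
  intros [Hf [cf Cf]]. split.
  - intros x y. rewrite Hf, hsub_scal. reflexivity.
  - exists (Cabs a * Rabs cf). intros x. rewrite hnorm_scal. rewrite Rmult_assoc.
    apply Rmult_le_compat_l; [apply Cabs_pos|]. pose proof (Cf x). pose proof (hnorm_pos x).
    pose proof (Rle_abs cf). apply Rle_trans with (cf * hnorm x); [lra|]. apply Rmult_le_compat_r; lra.
Qed.

Lemma fiter_BL {H : Hilbert} (f : H -> H) j : BL f -> BL (fiter f j).
Proof. intros Hf. induction j; simpl. apply BL_id. apply (BL_comp f (fiter f j)); auto. Qed.

Lemma oppow_S_dom {H : Hilbert} (T : Op H) k x :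
  dom (oppow T (S k)) x = (dom T x /\ dom (oppow T k) (ap T x)).
Proof. reflexivity. Qed.
Lemma oppow_S_ap {H : Hilbert} (T : Op H) k x :
  ap (oppow T (S k)) x = ap (oppow T k) (ap T x).
Proof. reflexivity. Qed.

Lemma part_b_back {H : Hilbert} (A G : Op H) (p : nat -> R) d n :
  selfadjoint A -> selfadjoint G -> (1 <= n)%nat -> (d <= n)%nat -> rho_nonempty (opmul A G) ->
  (forall x', dom (oppow (opmul A G) n) x' -> dom G (ap (oppow (opmul A G) n) x') ->
     Cnonneg (hinner (Peval (opmul A G) p d x') (ap G x'))) ->
  forall x, dom (oppow (opmul A G) n) x -> Cnonneg (hinner (Peval (opmul A G) p d x) (ap G x)).
Proof.
  intros SA SG Hn Hd [lam Hlam] Hyp x Dx.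
  assert (LA : linear_op A) by apply SA. assert (LG : linear_op G) by apply SG.
  set (T := opmul A G).
  assert (LT : linear_op T) by (apply linear_opmul; auto).
  assert (LTk : forall k, linear_op (oppow T k)) by (intros; apply linear_oppow; auto).
  destruct (resolvent _ _ LT Hlam) as [Rr [R1 [R2 [R3 [R4 R5]]]]].
  assert (DGR : forall w, dom G (Rr w)) by (intros w; apply (R1 w)).
  destruct (comp_bounded G Rr SG DGR R3 R4 R5) as [K HK].
  assert (BLR : BL Rr) by (apply BL_of; auto).
  assert (BLGR : BL (fun w => ap G (Rr w))).
  { apply BL_of.
    - intros u v. rewrite R3. apply (lin_add G _ _ LG (DGR u) (DGR v)).
    - intros a u. rewrite R4. apply (lin_scal G _ _ LG (DGR u)).
    - exists K; auto. }
  assert (TR : forall v, ap T (Rr v) = hadd v (hscal lam (Rr v))).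
  { intros v. apply hsub_eq. apply R1. }
  assert (KL : forall k j, (k <= j)%nat ->
     (forall w, dom (oppow T k) (fiter Rr j w)) /\ BL (fun w => ap (oppow T k) (fiter Rr j w)) /\
     (forall w, dom G w -> dom G (ap (oppow T k) (fiter Rr j w)))).
  { induction k; intros j Hkj.
    - simpl. split; [auto|]. split; [apply fiter_BL; auto|].
      intros w Gw. destruct j; simpl; auto.
    - destruct j as [|j']; [lia|]. simpl fiter.
      destruct (IHk j' ltac:(lia)) as [D1 [B1 G1]].
      destruct (IHk (S j') ltac:(lia)) as [D2 [B2 G2]]. simpl fiter in D2, B2, G2.
      assert (E : forall w, dom (oppow T (S k)) (Rr (fiter Rr j' w)) /\
                  ap (oppow T (S k)) (Rr (fiter Rr j' w)) =
                  hadd (ap (oppow T k) (fiter Rr j' w)) (hscal lam (ap (oppow T k) (Rr (fiter Rr j' w))))).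
      { intros w. rewrite oppow_S_dom, oppow_S_ap, TR.
        destruct (lin_scal _ lam _ (LTk k) (D2 w)) as [Ds Es].
        destruct (lin_add _ _ _ (LTk k) (D1 w) Ds) as [Da Ea].
        split; [split; [apply R1| exact Da]|]. rewrite Ea, Es. reflexivity. }
      split; [intros w; apply E|]. split.
      + eapply (proj1 (conj (fun (P : BL _) => P) I)).
        assert (Hext : forall w, ap (oppow T (S k)) (Rr (fiter Rr j' w)) =
                  hadd (ap (oppow T k) (fiter Rr j' w)) (hscal lam (ap (oppow T k) (Rr (fiter Rr j' w)))))
          by (intros; apply E).
        assert (BLs : BL (fun w => hadd (ap (oppow T k) (fiter Rr j' w)) (hscal lam (ap (oppow T k) (Rr (fiter Rr j' w)))))).
        { apply BL_add; auto. apply BL_scal; auto. }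
        destruct BLs as [Bs1 [cs Bs2]]. split.
        * intros u v. rewrite !Hext. apply Bs1.
        * exists cs. intros u. rewrite Hext. apply Bs2.
      + intros w Gw. rewrite (proj2 (E w)).
        apply (lin_add G _ _ LG (G1 w Gw)). apply (lin_scal G _ _ LG (G2 w Gw)). }
  assert (Rep : forall j v, dom (oppow T j) v -> exists w, v = fiter Rr j w).
  { induction j; intros v Dv; [exists v; reflexivity|].
    destruct Dv as [DTv DTj].
    set (v' := hsub (ap T v) (hscal lam v)).
    assert (Dv' : dom (oppow T j) v').
    { assert (Dvj : dom (oppow T j) v) by (apply (dom_pow_mono T (S j)); [split; auto| lia]).
      apply (lin_sub _ _ _ (LTk j) DTj). apply (lin_scal _ _ _ (LTk j) Dvj). }
    destruct (IHj v' Dv') as [w Ew]. exists w. simpl. rewrite <- Ew. unfold v'. symmetry. apply R2; auto. }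
  destruct (Rep n x Dx) as [w Ew]. subst x.
  destruct (dense_seq (dom G) (proj1 (proj2 SG)) w) as [ws [Dws Cws]].
  destruct n as [|n']; [lia|].
  apply (Cnonneg_lim (fun m => Peval T p d (fiter Rr (S n') (ws m)))
                     (fun m => ap G (fiter Rr (S n') (ws m)))).
  - unfold Peval. apply hconv_hsum. intros k Hk. apply hconv_scal.
    apply (hconv_BL (fun w => ap (oppow T k) (fiter Rr (S n') w))); auto.
    apply KL; lia.
  - simpl fiter. apply (hconv_BL (fun w => ap G (Rr (fiter Rr n' w)))); auto.
    apply (BL_comp (fun w => ap G (Rr w))); auto. apply fiter_BL; auto.
  - intros m. apply Hyp.
    + apply KL; lia.
    + apply KL; auto.
Qed.


Lemma inv_spec {H : Hilbert} (G : Op H) : boundedly_invertible G ->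
  forall y, dom G (ap (inv_op G) y) /\ ap G (ap (inv_op G) y) = y.
Proof.
  intros [_ [Sur _]] y. unfold inv_op; simpl. apply epsilon_spec.
  destruct (Sur y) as [x [Dx Ex]]. exists x. split; auto.
  rewrite hscal_zero_s, hsub_zero in Ex. exact Ex.
Qed.

Lemma inv_inj {H : Hilbert} (G : Op H) : boundedly_invertible G ->
  forall x y, dom G x -> dom G y -> ap G x = ap G y -> x = y.
Proof.
  intros [Inj _] x y Dx Dy E. apply Inj; auto. rewrite !hscal_zero_s, !hsub_zero. exact E.
Qed.

Theorem mainTheorem14 (H : Hilbert) (A G : Op H) (p : nat -> R) (d : nat) :
  selfadjoint A -> selfadjoint G -> is_degree p d ->
  (definitizable_with A G p d -> definitizable_with G A (shiftX p) (S d)) /\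
  (boundedly_invertible G ->
     (definitizable_with A G p d <->
        rho_nonempty (opmul A G) /\ rho_nonempty (opmul G A) /\
        forall x, dom (oppow (opmul G A) (Nat.max 1 d)) x ->
          Cnonneg (hinner (ap (polyop (opmul G A) p d) x) (ap (inv_op G) x)))).
Proof.
  intros SA SG Hdeg. split.
  - intros [R1 [R2 Hdef]]. split; [exact R2|]. split; [exact R1|].
    intros x Dx. replace (Nat.max 1 (S d)) with (S d) in Dx by lia.
    change (Cnonneg (hinner (hsum_upto (fun k => hscal (RtoC (shiftX p k)) (ap (oppow (opmul G A) k) x)) (S d)) (ap A x))).
    rewrite hsum_shift. change (hscal (RtoC (shiftX p 0)) (ap (oppow (opmul G A) 0) x)) with (hscal Defs.C0 x).
    rewrite hscal_zero_s, hzero_add.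
    change (Cnonneg (hinner (Peval (opmul G A) p d (ap G (ap A x))) (ap A x))).
    destruct Dx as [[DAx DGAx] Dd].
    rewrite shared by auto.
    destruct (swap A G d (ap A x) DGAx) as [[S1 _] _]. destruct (S1 Dd) as [Dy _].
    destruct d as [|d'].
    + change (Cnonneg (hinner (hscal (RtoC (p 0%nat)) (ap A x)) (ap G (ap A x)))).
      apply (part_a0 A G (p 0%nat) SA SG R2); [|split; auto].
      intros y Dy'. apply (Hdef y). simpl. split; auto.
    + apply (Hdef (ap A x)). replace (Nat.max 1 (S d')) with (S d') by lia. exact Dy.
  - intros Ginv. split.
    + intros [R1 [R2 Hdef]]. split; [exact R1|]. split; [exact R2|].
      intros y Dy. destruct (inv_spec G Ginv y) as [Dx' Ex'].
      set (x' := ap (inv_op G) y) in *.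
      replace (ap (polyop (opmul G A) p d) y) with (Peval (opmul G A) p d (ap G x'))
        by (rewrite Ex'; reflexivity).
      rewrite <- Ex' in Dy.
      rewrite (shared A G p d x'); auto.
      2:{ apply (dom_pow_mono _ _ d _ Dy). lia. }
      apply Hdef. destruct (swap A G (Nat.max 1 d) x' Dx') as [[S1 _] _]. apply S1; auto.
    + intros [R1 [R2 Hc]]. split; [exact R1|]. split; [exact R2|].
      apply (part_b_back A G p d (Nat.max 1 d) SA SG ltac:(lia) ltac:(lia) R1).
      intros x' Dn DGn.
      assert (Dx' : dom G x').
      { destruct (Nat.max 1 d) as [|m] eqn:Em; [lia|]. destruct Dn as [[Dg _] _]. exact Dg. }
      destruct (swap A G (Nat.max 1 d) x' Dx') as [[_ S2] _].
      specialize (Hc (ap G x') (S2 (conj Dn DGn))).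
      destruct (inv_spec G Ginv (ap G x')) as [Di Ei].
      rewrite (inv_inj G Ginv _ _ Di Dx' Ei) in Hc.
      change (ap (polyop (opmul G A) p d) (ap G x')) with (Peval (opmul G A) p d (ap G x')) in Hc.
      rewrite (shared A G p d x') in Hc; auto.
      apply (dom_pow_mono _ _ d _ (S2 (conj Dn DGn))). lia.
Qed.
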